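(* The following two assertions are equivalent. (i) (Gleason's theorem for $\mathbb{R}^3$.) For every state $P$ on $\mathbb{R}^3$ there is a symmetric positive semidefinite real $3\times 3$ matrix $W$ with trace $1$ such that $P(x)=\langle \vec{x},W\vec{x}\rangle$ for every atom $x$ of $L(\mathbb{R}^3)$, where $\vec{x}$ is a unit vector along $x$. (ii) Every bounded frame function $f$ on the set of all atoms of $L(\mathbb{R}^3)$ which satisfies $f(e_i)=0$ for $1\le i\le 3$ and $f(b_{ij})=0$ for $1\le i<j\le 3$ is identically zero.
   Context: $L(\mathbb{R}^3)$ denotes the lattice of subspaces of $\mathbb{R}^3$ (with its standard inner product); its atoms are the one-dimensional subspaces (rays). For an atom $x$, $\vec{x}$ denotes a unit vector spanning $x$. A frame function on a set $\Gamma$ of atoms of $L(\mathbb{R}^3)$ is a real function $f$ on $\Gamma$ for which there is a constant $C$ such that $f(x)+f(x')+f(x'')=C$ for every triple $x,x',x''$ of pairwise orthogonal atoms in $\Gamma$. A state on $\mathbb{R}^3$ is a function $P$ from the atoms of $L(\mathbb{R}^3)$ to $[0,\infty)$ such that $P(x)+P(x')+P(x'')=1$ for every triple of pairwise orthogonal atoms. Let $\vec{e_1}=(1,0,0)$, $\vec{e_2}=(0,1,0)$, $\vec{e_3}=(0,0,1)$ and $\vec{b_{ij}}=\frac{1}{\sqrt{2}}(\vec{e_i}+\vec{e_j})$ for $1\le i<j\le 3$. Let $e_i$ and $b_{ij}$ denote the rays spanned by these vectors. *)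

(* Defs.v *)
From HB Require Import structures.
From mathcomp Require Import all_boot all_order all_algebra.
From mathcomp Require Import reals.
Set Implicit Arguments. Unset Strict Implicit. Unset Printing Implicit Defensive.
Import Order.TTheory GRing.Theory Num.Theory.
Local Open Scope ring_scope.

Section Defs.
Variable R : realType.

Definition vec3 := 'rV[R]_3.

Definition dot3 (u v : vec3) : R := (u *m v^T) 0 0.

Definition atom (x : {vspace vec3}) : Prop := \dim x = 1%N.

Definition orth (x y : {vspace vec3}) : Prop :=
  forall u v, u \in x -> v \in y -> dot3 u v = 0.

Definition orth_triple (x y z : {vspace vec3}) : Prop :=
  [/\ atom x, atom y, atom z & [/\ orth x y, orth x z & orth y z]].

Definition state (P : {vspace vec3} -> R) : Prop :=
  (forall x, atom x -> 0 <= P x) /\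
  (forall x y z, orth_triple x y z -> P x + P y + P z = 1).

Definition frame_function (f : {vspace vec3} -> R) : Prop :=
  exists C : R, forall x y z, orth_triple x y z -> f x + f y + f z = C.

Definition bounded_on_atoms (f : {vspace vec3} -> R) : Prop :=
  exists M : R, forall x, atom x -> `|f x| <= M.

Definition evec (i : 'I_3) : vec3 := \row_(j < 3) (i == j)%:R.
Definition e_ray (i : 'I_3) : {vspace vec3} := <[evec i]>%VS.
(* b_ij is spanned by (e_i + e_j)/sqrt 2; the span does not depend on the scalar *)
Definition b_ray (i j : 'I_3) : {vspace vec3} := <[evec i + evec j]>%VS.

Definition Gleason3 : Prop :=
  forall P, state P ->
  exists W : 'M[R]_3,
    [/\ W^T = W,
        (forall v : vec3, 0 <= dot3 v (v *m W^T)),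
        \tr W = 1 &
        forall x, atom x -> forall v : vec3, v \in x -> dot3 v v = 1 ->
          P x = dot3 v (v *m W^T)].

Definition FrameZero : Prop :=
  forall f, frame_function f -> bounded_on_atoms f ->
    (forall i, f (e_ray i) = 0) ->
    (forall i j : 'I_3, (i < j)%N -> f (b_ray i j) = 0) ->
    forall x, atom x -> f x = 0.

End Defs.

(* Main.v *)
Require Import Defs.
From HB Require Import structures.
From mathcomp Require Import all_boot all_order all_algebra.
From mathcomp Require Import reals.
From mathcomp Require Import ring lra.
Set Implicit Arguments. Unset Strict Implicit. Unset Printing Implicit Defensive.
Import Order.TTheory GRing.Theory Num.Theory.
Local Open Scope ring_scope.

Notation i0 := (@ord0 2).
Notation i1 := (@lift 3 ord0 (@ord0 1)).
Notation i2 := (@lift 3 ord0 (@lift 2 ord0 (@ord0 0))).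

Section S. Variable R : realType.
Implicit Types u v : vec3 R.

Lemma ord3P (j : 'I_3) : [\/ j = i0, j = i1 | j = i2].
Proof.
case: j => [[|[|[|k]]] Hj]; [apply: Or31|apply: Or32|apply: Or33|by []];
  by apply/val_inj.
Qed.

Lemma dot3E u v : dot3 u v = u 0 i0 * v 0 i0 + u 0 i1 * v 0 i1 + u 0 i2 * v 0 i2.
Proof. by rewrite /dot3 mxE !big_ord_recl big_ord0 !mxE addr0 addrA. Qed.

Lemma dot3C u v : dot3 u v = dot3 v u.
Proof. rewrite !dot3E; ring. Qed.

Lemma dot3Zl a u v : dot3 (a *: u) v = a * dot3 u v.
Proof. rewrite !dot3E !mxE; ring. Qed.

Lemma dot3Zr a u v : dot3 u (a *: v) = a * dot3 u v.
Proof. by rewrite dot3C dot3Zl dot3C. Qed.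

Lemma dot3Dl w u v : dot3 (u + w) v = dot3 u v + dot3 w v.
Proof. rewrite !dot3E !mxE; ring. Qed.

Lemma dot3_ge0 v : 0 <= dot3 v v.
Proof. rewrite dot3E; nra. Qed.

Lemma dot3_eq0 v : dot3 v v = 0 -> v = 0.
Proof.
rewrite dot3E => H; apply/matrixP => i j; rewrite (ord1 i) mxE.
have h0 : v 0 i0 = 0 by nra.
have h1 : v 0 i1 = 0 by nra.
have h2 : v 0 i2 = 0 by nra.
by case: (ord3P j) => ->.
Qed.

Lemma dot3_gt0 v : v != 0 -> 0 < dot3 v v.
Proof.
move=> nz; rewrite lt_def dot3_ge0 andbT; apply/eqP => /dot3_eq0 h.
by rewrite h eqxx in nz.
Qed.

End S.
Section T. Variable R : realType.
Implicit Types u v : vec3 R.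
Definition qf (W : 'M[R]_3) v := dot3 v (v *m W^T).

Lemma qfZ W a v : qf W (a *: v) = a ^+ 2 * qf W v.
Proof. by rewrite /qf -scalemxAl dot3Zl dot3Zr mulrA expr2. Qed.

Lemma trace_orth (W : 'M[R]_3) (p : 'I_3 -> vec3 R) :
 (forall i, p i != 0) -> (forall i j, i != j -> dot3 (p i) (p j) = 0) ->
 \sum_i qf W (p i) / dot3 (p i) (p i) = \tr W.
Proof.
move=> nz horth.
pose U : 'M[R]_3 := \matrix_(i,j) p i 0 j.
pose DU : 'M[R]_3 := \matrix_(i,j) (p i 0 j / dot3 (p i) (p i)).
have h1 : DU *m U^T = 1%:M.
  apply/matrixP => i j; rewrite !mxE.
  transitivity (dot3 (p i) (p j) / dot3 (p i) (p i)).
    rewrite [dot3 (p i) (p j)]/dot3 mxE mulr_suml; apply: eq_bigr => l _; rewrite !mxE; ring.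
  case: eqP => [->|/eqP ne]; first by rewrite mulfV // lt0r_neq0 // dot3_gt0.
  by rewrite horth // mul0r.
have h2 := mulmx1C h1.
rewrite -[in RHS](mulmx1 W) -h2 mulmxA mxtrace_mulC /mxtrace.
apply: eq_bigr => i _; rewrite !mxE /qf [dot3 (p i) (_ *m _)]/dot3 mxE mulr_suml.
apply: eq_bigr => l _; rewrite !mxE !mulr_sumr ?mulr_suml.
apply: eq_bigr => m _; rewrite !mxE; ring.
Qed.
End T.
Section U. Variable R : realType.
Implicit Types u v : vec3 R.

Lemma atomP (x : {vspace vec3 R}) : atom x -> vpick x != 0 /\ x = <[vpick x]>%VS.
Proof.
rewrite /atom => hd.
have nz : vpick x != 0 by rewrite vpick0; apply/eqP => h; rewrite h dimv0 in hd.
split => //; apply/eqP; rewrite eq_sym eqEdim -memvE memv_pick /= dim_vline nz hd.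
by [].
Qed.

Lemma atom_line v : v != 0 -> atom <[v]>%VS.
Proof. by rewrite /atom dim_vline => ->. Qed.

Lemma orth_line (p q : vec3 R) : dot3 p q = 0 -> orth <[p]>%VS <[q]>%VS.
Proof. by move=> h u w /vlineP[a ->] /vlineP[b ->]; rewrite dot3Zl dot3Zr h !mulr0. Qed.

Lemma orth_pick (x y : {vspace vec3 R}) : orth x y -> dot3 (vpick x) (vpick y) = 0.
Proof. by move=> h; apply: h; apply: memv_pick. Qed.

Lemma vpick_line v : v != 0 -> exists2 k, k != 0 & vpick <[v]>%VS = k *: v.
Proof.
move=> nz; have /vlineP[k hk] := memv_pick <[v]>%VS.
exists k => //; apply/eqP => k0; move: hk; rewrite k0 scale0r => /eqP.
by rewrite vpick0 -dimv_eq0 dim_vline nz.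
Qed.

Lemma nz_dot v : dot3 v v != 0 -> v != 0.
Proof. by apply: contraNneq => ->; rewrite dot3E !mxE !mulr0 !addr0. Qed.

Definition mk3 (a b c : R) : vec3 R := \row_(j < 3) nth 0 [:: a; b; c] j.

Lemma dot3_mk3 a b c u : dot3 (mk3 a b c) u = a * u 0 i0 + b * u 0 i1 + c * u 0 i2.
Proof. by rewrite dot3E !mxE. Qed.

Lemma complete v : v != 0 -> exists q r,
  [/\ q != 0, r != 0, dot3 v q = 0, dot3 v r = 0 & dot3 q r = 0].
Proof.
move=> nz; have pos := dot3_gt0 nz.
set a := v 0 i0; set b := v 0 i1; set c := v 0 i2.
have hv : a ^+ 2 + b ^+ 2 + c ^+ 2 > 0 by move: pos; rewrite dot3E -/a -/b -/c; nra.
have [q [hq hvq]] : exists q, dot3 q q > 0 /\ dot3 v q = 0.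
  have [hab|hab] := boolP (a ^+ 2 + b ^+ 2 > 0).
    exists (mk3 (- b) a 0); rewrite dot3_mk3 dot3C dot3_mk3 !mxE /= -/a -/b -/c.
    split; nra.
  exists (mk3 0 (- c) b); rewrite dot3_mk3 dot3C dot3_mk3 !mxE /= -/a -/b -/c.
  split; nra.
set q0 := q 0 i0; set q1 := q 0 i1; set q2 := q 0 i2.
pose r := mk3 (b * q2 - c * q1) (c * q0 - a * q2) (a * q1 - b * q0).
have lag : dot3 r r = dot3 v v * dot3 q q - (dot3 v q) ^+ 2.
  rewrite dot3_mk3 !dot3E !mxE /= -/a -/b -/c -/q0 -/q1 -/q2; ring.
exists q, r; split.
- by apply: nz_dot; rewrite lt0r_neq0.
- apply: nz_dot; rewrite lag hvq expr0n /= subr0 lt0r_neq0 //; exact: mulr_gt0.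
- by [].
- rewrite dot3C dot3_mk3 -/a -/b -/c; ring.
- rewrite dot3C dot3_mk3 -/q0 -/q1 -/q2; ring.
Qed.

End U.
Section V. Variable R : realType.
Implicit Types u v : vec3 R.

Lemma qfE (W : 'M[R]_3) v : qf W v = \sum_l \sum_m v 0 l * v 0 m * W l m.
Proof.
rewrite /qf /dot3 mxE; apply: eq_bigr => l _; rewrite !mxE mulr_sumr.
by apply: eq_bigr => m _; rewrite !mxE mulrA.
Qed.

Lemma qfE3 (W : 'M[R]_3) v : qf W v =
  v 0 i0 * v 0 i0 * W i0 i0 + v 0 i0 * v 0 i1 * W i0 i1 + v 0 i0 * v 0 i2 * W i0 i2 +
  v 0 i1 * v 0 i0 * W i1 i0 + v 0 i1 * v 0 i1 * W i1 i1 + v 0 i1 * v 0 i2 * W i1 i2 +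
  v 0 i2 * v 0 i0 * W i2 i0 + v 0 i2 * v 0 i1 * W i2 i1 + v 0 i2 * v 0 i2 * W i2 i2.
Proof. rewrite qfE !big_ord_recl !big_ord0 /=. ring. Qed.

Definition Qf (W : 'M[R]_3) v := qf W v / dot3 v v.

Lemma QfZ W k v : k != 0 -> Qf W (k *: v) = Qf W v.
Proof.
move=> k0; rewrite /Qf qfZ dot3Zl dot3Zr mulrA -expr2.
have [->|nz] := eqVneq (dot3 v v) 0; first by rewrite !mulr0 !invr0 !mulr0.
field; by rewrite nz.
Qed.

Lemma evecE (i j : 'I_3) : evec R i 0 j = (i == j)%:R.
Proof. by rewrite mxE. Qed.

Lemma dot_evec (i j : 'I_3) : dot3 (evec R i) (evec R j) = (i == j)%:R.
Proof.
rewrite dot3E !evecE.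
by case: (ord3P i) => ->; case: (ord3P j) => -> /=; rewrite ?mulr0 ?mul0r ?mulr1 ?addr0 ?add0r.
Qed.

Lemma evec_nz i : evec R i != 0.
Proof. by apply: nz_dot; rewrite dot_evec eqxx oner_neq0. Qed.

Lemma e_triple : orth_triple (e_ray R i0) (e_ray R i1) (e_ray R i2).
Proof.
split; try apply: atom_line; try apply: evec_nz.
by split; apply: orth_line; rewrite dot_evec.
Qed.

Lemma Qf_evec W i : Qf W (evec R i) = W i i.
Proof.
rewrite /Qf dot_evec eqxx invr1 mulr1 qfE3 !evecE.
by case: (ord3P i) => -> /=; rewrite ?mulr0 ?mul0r ?mulr1 ?addr0 ?add0r ?mul1r.
Qed.

Lemma Qf_bvec W (i j : 'I_3) : (i < j)%N ->
  Qf W (evec R i + evec R j) = (W i i + W j j + W i j + W j i) / 2.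
Proof.
rewrite /Qf qfE3 dot3E !mxE.
by case: (ord3P i) => ->; case: (ord3P j) => -> //= _; field.
Qed.

End V.
Section X. Variable R : realType.
Implicit Types u v : vec3 R.

Lemma comp_le v l : v 0 l ^+ 2 <= dot3 v v.
Proof. rewrite dot3E; case: (ord3P l) => ->; nra. Qed.

Lemma prod_le v l m : `|v 0 l * v 0 m| <= 2 * dot3 v v.
Proof.
have h1 := comp_le v l; have h2 := comp_le v m.
rewrite ler_norml; apply/andP; split; nra.
Qed.

Lemma qf_bound (W : 'M[R]_3) v :
  `|qf W v| <= 2 * (\sum_l \sum_m `|W l m|) * dot3 v v.
Proof.
have -> : 2 * (\sum_l \sum_m `|W l m|) * dot3 v v =
          \sum_l \sum_m (`|W l m| * (2 * dot3 v v)).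
  rewrite (mulrC 2) -mulrA big_distrl; apply: eq_bigr => l _.
  by rewrite big_distrl.
rewrite qfE; apply: (le_trans (ler_norm_sum _ _ _)); apply: ler_sum => l _.
apply: (le_trans (ler_norm_sum _ _ _)); apply: ler_sum => m _.
rewrite normrM mulrC; apply: ler_wpM2l => //; exact: prod_le.
Qed.

Lemma Qf_bound (W : 'M[R]_3) v :
  `|Qf W v| <= 2 * (\sum_l \sum_m `|W l m|).
Proof.
rewrite /Qf; have [->|nz] := eqVneq v 0.
  rewrite dot3E !mxE !mulr0 !addr0 invr0 mulr0 normr0.
  by apply: mulr_ge0 => //; apply: sumr_ge0 => l _; apply: sumr_ge0.
have hd := dot3_gt0 nz.
rewrite normrM normfV (gtr0_norm hd) ler_pdivrMr //; exact: qf_bound.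
Qed.

Lemma Qf_atom W (x : {vspace vec3 R}) v : atom x -> v \in x -> v != 0 ->
  Qf W (vpick x) = Qf W v.
Proof.
move=> /atomP[nz ex] hv vnz; rewrite ex in hv; case/vlineP: hv => k hk.
rewrite hk QfZ //; apply/eqP => k0; by rewrite hk k0 scale0r eqxx in vnz.
Qed.

Lemma Qf_line W v : v != 0 -> Qf W (vpick <[v]>%VS) = Qf W v.
Proof. by move=> nz; have [k k0 ->] := vpick_line nz; rewrite QfZ. Qed.

Variable P : {vspace vec3 R} -> R.
Hypothesis hP : state P.

Lemma P_le1 x : atom x -> P x <= 1.
Proof.
move=> hx; have [nz ex] := atomP hx.
have [q [r [qnz rnz h1 h2 h3]]] := complete nz.
have T : orth_triple x <[q]>%VS <[r]>%VS.
  split; try exact: atom_line; try done.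
  by split; [rewrite ex; apply: orth_line|rewrite ex; apply: orth_line|apply: orth_line].
have := hP.2 _ _ _ T; have := hP.1 _ (atom_line qnz); have := hP.1 _ (atom_line rnz).
lra.
Qed.

Definition Wm : 'M[R]_3 := \matrix_(i, j) (if i == j then P (e_ray R i)
   else P (b_ray R i j) - (P (e_ray R i) + P (e_ray R j)) / 2).

Definition fP x := P x - Qf Wm (vpick x).

Lemma b_rayC i j : b_ray R i j = b_ray R j i.
Proof. by rewrite /b_ray addrC. Qed.

Lemma Wm_sym : Wm^T = Wm.
Proof.
apply/matrixP => i j; rewrite !mxE eq_sym.
by case: eqP => [->|_] //; rewrite b_rayC (addrC (P (e_ray R j))).
Qed.

Lemma trWm : \tr Wm = 1.
Proof.
rewrite /mxtrace !big_ord_recl big_ord0 !mxE /= addr0 addrA.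
exact: hP.2 _ _ _ (e_triple R).
Qed.

Lemma fP_frame x y z : orth_triple x y z -> fP x + fP y + fP z = 1 - \tr Wm.
Proof.
case=> ax ay az [oxy oxz oyz].
have [nx _] := atomP ax; have [ny _] := atomP ay; have [nz _] := atomP az.
pose p (i : 'I_3) := nth 0 [:: vpick x; vpick y; vpick z] i.
have H1 : forall i, p i != 0 by move=> i; case: (ord3P i) => ->.
have H2 : forall i j, i != j -> dot3 (p i) (p j) = 0.
  move=> i j; case: (ord3P i) => ->; case: (ord3P j) => -> /=; rewrite ?eqxx // => _;
  first [exact: orth_pick | rewrite dot3C; exact: orth_pick].
have E := trace_orth Wm H1 H2.
rewrite !big_ord_recl big_ord0 /= addr0 in E.
rewrite /fP /Qf -E; have := hP.2 _ _ _ (And4 ax ay az (And3 oxy oxz oyz)).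
lra.
Qed.


End X.
Section Y. Variable R : realType.

Lemma bvec_nz (i j : 'I_3) : (i < j)%N -> evec R i + evec R j != 0.
Proof.
move=> hij; apply: nz_dot; rewrite dot3E !mxE.
case: (ord3P i) hij => ->; case: (ord3P j) => -> //= _.
all: apply: lt0r_neq0; rewrite /=; lra.
Qed.

Lemma dir2 : FrameZero R -> Gleason3 R.
Proof.
move=> FZ P hP; exists (Wm P).
have S0 : 0 <= 2 * (\sum_l \sum_m `|Wm P l m|).
  by apply: mulr_ge0 => //; apply: sumr_ge0 => l _; apply: sumr_ge0.
have Z : forall x, atom x -> fP P x = 0.
  apply: FZ.
  - by exists (1 - \tr (Wm P)); apply: fP_frame.
  - exists (1 + 2 * (\sum_l \sum_m `|Wm P l m|)) => x ax.
    have h1 := hP.1 _ ax; have h2 := P_le1 hP ax.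
    have := Qf_bound (Wm P) (vpick x); rewrite ler_norml => /andP[h3 h4].
    rewrite /fP ler_norml; apply/andP; split; lra.
  - move=> i; rewrite /fP /e_ray Qf_line ?evec_nz // Qf_evec mxE eqxx subrr //.
  - move=> i j hij; rewrite /fP /b_ray Qf_line ?bvec_nz // Qf_bvec //.
    have ne : i != j by apply: contraTneq hij => ->; rewrite ltnn.
    rewrite !mxE !eqxx (negbTE ne) eq_sym (negbTE ne) /=.
    rewrite -/(b_ray R i j) -/(b_ray R j i) [b_ray R j i]b_rayC; lra.
split.
- exact: Wm_sym.
- move=> v; have [->|nz] := eqVneq v 0; first by rewrite dot3E !mxE !mul0r !addr0.
  have := Z _ (atom_line nz); rewrite /fP Qf_line // /Qf => h.
  have hd := dot3_gt0 nz; have hp := hP.1 _ (atom_line nz).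
  have : 0 <= qf (Wm P) v / dot3 v v by lra.
  by rewrite pmulr_lge0 ?invr_gt0.
- exact: trWm.
- move=> x ax v hv hv1; have := Z _ ax; rewrite /fP (Qf_atom _ ax hv).
    by rewrite /Qf hv1 invr1 mulr1 /qf; lra.
  by apply: nz_dot; rewrite hv1 oner_neq0.
Qed.
End Y.
Section Z. Variable R : realType.
Implicit Types u v : vec3 R.

Lemma dot_bvec (i j : 'I_3) : (i < j)%N -> dot3 (evec R i + evec R j) (evec R i + evec R j) = 2.
Proof.
move=> hij; rewrite dot3E !mxE.
case: (ord3P i) hij => ->; case: (ord3P j) => -> //= _; ring.
Qed.

Lemma unit_in (x : {vspace vec3 R}) : atom x -> exists2 v, v \in x & dot3 v v = 1.
Proof.
move=> ax; have [nz _] := atomP ax; have hd := dot3_gt0 nz.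
exists ((Num.sqrt (dot3 (vpick x) (vpick x)))^-1 *: vpick x).
  by apply: memvZ; apply: memv_pick.
rewrite dot3Zl dot3Zr mulrA -expr2 exprVn sqr_sqrtr ?ltW // mulVf //.
exact: lt0r_neq0.
Qed.

Lemma dir1 : Gleason3 R -> FrameZero R.
Proof.
move=> G f [C hC] [M hM] he hb x ax.
have C0 : C = 0 by have := hC _ _ _ (e_triple R); rewrite !he; lra.
pose M' := `|M| + 1.
have hM' : 0 < M' by rewrite /M'; have := normr_ge0 M; lra.
have fge : forall y, atom y -> 0 <= f y + M'.
  move=> y ay; have := hM _ ay; rewrite ler_norml => /andP[h1 h2].
  have := ler_norm M; rewrite /M'; lra.
clearbody M'.
pose P y := (f y + M') / (3 * M').
have sP : state P.
  split; first by move=> y ay; rewrite /P divr_ge0 // ?fge //; lra.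
  move=> y1 y2 y3 T; have := hC _ _ _ T; rewrite C0 /P => h.
  rewrite -!mulrDl.
  have -> : f y1 + M' + (f y2 + M') + (f y3 + M') = 3 * M' by lra.
  by rewrite mulfV //; apply: lt0r_neq0; lra.
have [W [Wsym Wpsd Wtr hW]] := G P sP.
have key : forall y v, atom y -> v \in y -> dot3 v v = 1 ->
    (f y + M') / (3 * M') = qf W v by move=> y v ay hv h1; exact: hW.
have Wd : forall i, W i i = 3^-1.
  move=> i; have := key _ _ (atom_line (evec_nz R i)) (memv_line _) _.
  rewrite dot_evec eqxx => /(_ erefl); rewrite he.
  have := Qf_evec W i; rewrite /Qf dot_evec eqxx invr1 mulr1 => ->.
  move=> <-; field; exact: lt0r_neq0.
have Wo : forall i j : 'I_3, (i < j)%N -> W j i = - W i j.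
  move=> i j hij; pose s := Num.sqrt (2^-1 : R).
  have s2 : s ^+ 2 = 2^-1 by rewrite /s sqr_sqrtr // invr_ge0.
  have := key _ (s *: (evec R i + evec R j)) (atom_line (bvec_nz R hij))
    (memvZ _ (memv_line _)).
  rewrite dot3Zl dot3Zr mulrA -expr2 s2 dot_bvec // mulVf ?pnatr_eq0 // => /(_ erefl).
  rewrite hb // qfZ s2.
  have := Qf_bvec W hij; rewrite /Qf dot_bvec // !Wd => h.
  have -> : qf W (evec R i + evec R j) = (3^-1 + 3^-1 + W i j + W j i) / 2 * 2.
    by rewrite -h mulfVK ?pnatr_eq0.
  move=> h2; have h3 : W i j + W j i = 0.
    have : (0 + M') / (3 * M') = 3^-1 by field; exact: lt0r_neq0.
    rewrite h2 mulfVK ?pnatr_eq0 // => h4.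
    lra.
  lra.
have [v hv hv1] := unit_in ax.
have := key _ _ ax hv hv1.
have -> : qf W v = 3^-1.
  rewrite qfE3 !Wd (Wo i0 i1) // (Wo i0 i2) // (Wo i1 i2) //.
  transitivity (dot3 v v * 3^-1); last by rewrite hv1 mul1r.
  rewrite dot3E; ring.
move=> h; have : f x + M' = M'.
  have E : f x + M' = (f x + M') / (3 * M') * (3 * M').
    by rewrite mulfVK //; apply: lt0r_neq0; lra.
  by rewrite E h mulrA mulVf ?pnatr_eq0 // mul1r.
lra.
Qed.

End Z.

Theorem mainTheorem1 (R : realType) : Gleason3 R <-> FrameZero R.
Proof. by split; [exact: dir1 | exact: dir2]. Qed.
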